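(* Let $\Omega\subset\mathbb{C}^n$ be a bounded domain, and let $\Psi,\Psi'$ be elementary local indicators on $\mathbb{D}^n$ such that $\Psi\le\Psi'+C$ for some constant $C$, and $\tau':=\tau_{\Psi'}>0$. Let $A\subset\mathbb{D}$, $a\in\Omega$ and $\varphi\in Hol(\mathbb{D},\Omega)$ satisfy $\sum_{\alpha\in A}m_{\varphi,a,\Psi'}(\alpha)\le\tau'$. Then $\sum_{\alpha\in A}m_{\varphi,a,\Psi}(\alpha)\le\tau:=\tau_\Psi$.
   Context: $\mathbb{D}$ is the unit disk; $z\cdot\bar w=\sum_jz_j\bar w_j$. An elementary local indicator is $\Psi(z)=\max_{1\le j\le n}m_j\log|z\cdot\bar v_j|$ on $\mathbb{D}^n$, with $\{v_j\}$ a basis of $\mathbb{C}^n$ and $m_j\in\mathbb{R}_+$; its Monge–Ampère mass at $0$ is $\tau_\Psi=m_1\cdots m_n$. Multiplicity: if $\varphi(\alpha)=a$, $m_{\varphi,a,\Psi}(\alpha)=\min\big(\tau_\Psi,\liminf_{\zeta\to0}\Psi(\varphi(\alpha+\zeta)-a)/\log|\zeta|\big)$; otherwise $m_{\varphi,a,\Psi}(\alpha)=0$. *)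

(* Defs.v *)
From mathcomp Require Import ssreflect ssrbool eqtype ssrnat seq fintype.
From Stdlib Require Import Reals List ClassicalEpsilon.
From Coquelicot Require Import Coquelicot.
Open Scope R_scope.

Definition cvec (n : nat) := 'I_n -> C.

Definition ord_list (n : nat) : list 'I_n := enum 'I_n.

Definition Csum (n : nat) (f : 'I_n -> C) : C :=
  fold_right Cplus (RtoC 0) (List.map f (ord_list n)).

Definition cdot (n : nat) (z w : cvec n) : C :=
  Csum n (fun j => Cmult (z j) (Cconj (w j))).

Definition Rbar_log (x : R) : Rbar :=
  if Req_EM_T x 0 then m_infty else Finite (ln x).

Definition Rbar_max2 (x y : Rbar) : Rbar :=
  if Rbar_le_dec x y then y else x.

Definition Rbar_min2 (x y : Rbar) : Rbar :=
  if Rbar_le_dec x y then x else y.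

Definition is_basis (n : nat) (v : 'I_n -> cvec n) : Prop :=
  forall c : 'I_n -> C,
    (forall k : 'I_n, Csum n (fun j => Cmult (c j) (v j k)) = RtoC 0) ->
    forall j, c j = RtoC 0.

Definition elem_indicator (n : nat) (v : 'I_n -> cvec n) (m : 'I_n -> R) : Prop :=
  is_basis n v /\ forall j, 0 < m j.

Definition Psi (n : nat) (v : 'I_n -> cvec n) (m : 'I_n -> R) (z : cvec n) : Rbar :=
  fold_right Rbar_max2 m_infty
    (List.map (fun j => Rbar_mult (Finite (m j)) (Rbar_log (Cmod (cdot n z (v j)))))
       (ord_list n)).

Definition tau (n : nat) (m : 'I_n -> R) : R :=
  fold_right Rmult 1 (List.map m (ord_list n)).

Definition in_polydisk (n : nat) (z : cvec n) : Prop := forall k, Cmod (z k) < 1.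

Definition liminf0 (g : C -> Rbar) : Rbar :=
  Rbar_lub (fun y => exists r, 0 < r /\
    y = Rbar_glb (fun w => exists zeta, 0 < Cmod zeta < r /\ w = g zeta)).

Definition vsub (n : nat) (z w : cvec n) : cvec n := fun k => Cminus (z k) (w k).

Definition multiplicity (n : nat) (phi : C -> cvec n) (a : cvec n)
    (v : 'I_n -> cvec n) (m : 'I_n -> R) (alpha : C) : Rbar :=
  if excluded_middle_informative (phi alpha = a) then
    Rbar_min2 (Finite (tau n m))
      (liminf0 (fun zeta =>
         Rbar_div (Psi n v m (vsub n (phi (Cplus alpha zeta)) a))
                  (Finite (ln (Cmod zeta)))))
  else Finite 0.

Definition Rbar_sum_over (A : C -> Prop) (f : C -> Rbar) : Rbar :=
  Rbar_lub (fun s => exists l : list C, NoDup l /\ (forall x, In x l -> A x) /\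
    s = fold_right Rbar_plus (Finite 0) (List.map f l)).

Definition cn_open (n : nat) (U : cvec n -> Prop) : Prop :=
  forall z, U z -> exists r, 0 < r /\
    forall w, (forall k, Cmod (Cminus (w k) (z k)) < r) -> U w.

Definition cn_bounded (n : nat) (U : cvec n -> Prop) : Prop :=
  exists M, forall z, U z -> forall k, Cmod (z k) <= M.

Definition cn_connected (n : nat) (U : cvec n -> Prop) : Prop :=
  forall V W : cvec n -> Prop, cn_open n V -> cn_open n W ->
    (forall z, U z -> V z \/ W z) ->
    (exists z, U z /\ V z) -> (exists z, U z /\ W z) ->
    exists z, U z /\ V z /\ W z.

Definition bounded_domain (n : nat) (U : cvec n -> Prop) : Prop :=
  (exists z, U z) /\ cn_open n U /\ cn_connected n U /\ cn_bounded n U.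

Definition Hol_disk (n : nat) (Omega : cvec n -> Prop) (phi : C -> cvec n) : Prop :=
  (forall z, Cmod z < 1 -> Omega (phi z)) /\
  (forall k z, Cmod z < 1 ->
     @ex_derive C_AbsRing C_NormedModule (fun w => phi w k) z).

(* Main.v *)
From HB Require Import structures.
From mathcomp Require Import all_boot all_algebra.
From mathcomp Require Import boolp fingroup perm.
Require Import Defs.
From Stdlib Require Import Reals Lra List ClassicalEpsilon Classical.
From Coquelicot Require Import Coquelicot.

Delimit Scope ring_scope with ring.
Open Scope R_scope.

Lemma lub_ub E x : E x -> Rbar_le x (Rbar_lub E).
Proof. rewrite /Rbar_lub; case: Rbar_ex_lub => l [Hu _] /= Hx; exact: Hu. Qed.
Lemma lub_least E b : (forall x, E x -> Rbar_le x b) -> Rbar_le (Rbar_lub E) b.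
Proof. rewrite /Rbar_lub; case: Rbar_ex_lub => l [_ Hl] /= H; exact: Hl. Qed.
Lemma glb_lb E x : E x -> Rbar_le (Rbar_glb E) x.
Proof. rewrite /Rbar_glb; case: Rbar_ex_glb => l [Hu _] /= Hx; exact: Hu. Qed.
Lemma glb_greatest E b : (forall x, E x -> Rbar_le b x) -> Rbar_le b (Rbar_glb E).
Proof. rewrite /Rbar_glb; case: Rbar_ex_glb => l [_ Hl] /= H; exact: Hl. Qed.

Lemma fold_max_le (l : list Rbar) y :
  Rbar_le (fold_right Rbar_max2 m_infty l) y <-> (forall x, In x l -> Rbar_le x y).
Proof.
elim: l => [|x l IH] /=; first by split => // _; case: y.
rewrite /Rbar_max2; case: Rbar_le_dec => Hx; split.
- move=> H z [<-|Hz]; first exact: Rbar_le_trans Hx H. by apply IH.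
- move=> H; apply IH => z Hz; apply H; by right.
- move=> H z [<-|Hz] //. apply IH; last by [].
  apply: Rbar_le_trans H. apply Rbar_lt_le. by apply Rbar_not_le_lt.
- move=> H; apply H; by left.
Qed.

Lemma fold_max_ge (l : list Rbar) x : In x l -> Rbar_le x (fold_right Rbar_max2 m_infty l).
Proof.
elim: l => [|y l IH] //= [<-|Hx]; rewrite /Rbar_max2; case: Rbar_le_dec => H //; try apply Rbar_le_refl.
- by apply IH.
- apply: Rbar_le_trans (IH Hx) _. apply Rbar_lt_le. by apply Rbar_not_le_lt.
Qed.

Lemma Rbar_mult_pos_minf (mm : R) : 0 < mm -> Rbar_mult (Finite mm) m_infty = m_infty.
Proof.
move=> Hm. rewrite /Rbar_mult /=. case: Rle_dec => H; last lra.
case: Rle_lt_or_eq_dec => // H'; lra.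
Qed.

Lemma exp_le' x y : x <= y -> exp x <= exp y.
Proof. case=> H; [left; exact: exp_increasing | rewrite H; lra]. Qed.
Lemma exp_le_inv x y : exp x <= exp y -> x <= y.
Proof. move=> H; apply Rnot_lt_le => H'; have := exp_increasing _ _ H'; lra. Qed.
Lemma mul_le_div a b mm : 0 < mm -> (mm * a <= b <-> a <= b / mm).
Proof.
move=> Hm; split => H.
- apply (Rmult_le_reg_l mm) => //. rewrite /Rdiv -Rmult_assoc (Rmult_comm mm b) Rmult_assoc Rinv_r; lra.
- apply (Rmult_le_compat_l mm) in H; last lra. rewrite /Rdiv -Rmult_assoc (Rmult_comm mm b) Rmult_assoc Rinv_r in H; lra.
Qed.

Lemma term_le (mm x y : R) : 0 < mm -> 0 <= x ->
  (Rbar_le (Rbar_mult (Finite mm) (Rbar_log x)) (Finite y) <-> x <= exp (y / mm)).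
Proof.
move=> Hm Hx. rewrite /Rbar_log; case: Req_EM_T => Hx0.
- rewrite Rbar_mult_pos_minf //= Hx0. split => // _. left; apply exp_pos.
- have Hxp : 0 < x by lra. rewrite /=. rewrite mul_le_div //. split => H.
  + rewrite -(exp_ln x Hxp). exact: exp_le'.
  + apply exp_le_inv. by rewrite exp_ln.
Qed.

Lemma in_In (T : eqType) (s : list T) x : x \in s -> In x s.
Proof. elim: s => [|y s IH] //; rewrite seq.in_cons => /orP [/eqP ->|H] /=; [by left|right; exact: IH]. Qed.

Lemma In_ord n (k : 'I_n) : In k (ord_list n).
Proof. apply in_In. by rewrite /ord_list mem_enum. Qed.

Definition term n (v : 'I_n -> cvec n) (m : 'I_n -> R) z j :=
  Rbar_mult (Finite (m j)) (Rbar_log (Cmod (cdot n z (v j)))).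

Lemma Psi_le n v m z y : (forall k, 0 < m k) ->
  (Rbar_le (Psi n v m z) (Finite y) <-> forall k, Cmod (cdot n z (v k)) <= exp (y / m k)).
Proof.
move=> Hm. rewrite /Psi fold_max_le. split => H.
- move=> k. rewrite -term_le //; last exact: Cmod_ge_0. apply H.
  apply in_map_iff. exists k; split => //. exact: In_ord.
- move=> x /in_map_iff [k [<- _]]. rewrite term_le //; last exact: Cmod_ge_0.
Qed.

Lemma Psi_ge n v m z k : Rbar_le (term n v m z k) (Psi n v m z).
Proof. apply fold_max_ge. apply in_map_iff. exists k; split => //. exact: In_ord. Qed.

Lemma mult_pinf_neg x : x < 0 -> Rbar_mult p_infty (Finite x) = m_infty.
Proof. move=> Hx. rewrite /Rbar_mult /=. case: Rle_dec => H //; exfalso; lra. Qed.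
Lemma mult_minf_neg x : x < 0 -> Rbar_mult m_infty (Finite x) = p_infty.
Proof. move=> Hx. rewrite /Rbar_mult /=. case: Rle_dec => H //; exfalso; lra. Qed.

Lemma div_le (u : Rbar) (Y l : R) : l < 0 ->
  (Rbar_le (Finite Y) (Rbar_div u (Finite l)) <-> Rbar_le u (Finite (Y * l))).
Proof.
move=> Hl. have Hil : / l < 0 by apply Rinv_lt_0_compat.
have Hll : l * / l = 1 by apply Rinv_r; lra.
case: u => [r| |].
- simpl. have E : r * / l * l = r by field; lra.
  split => H.
  + have : (r * / l - Y) * l <= 0 by nra.
    nra.
  + have : (Y * l - r) * / l <= 0 by nra.
    have E2 : Y * l * / l = Y by field; lra.
    nra.
- rewrite /Rbar_div /Rbar_inv mult_pinf_neg //.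
- rewrite /Rbar_div /Rbar_inv mult_minf_neg //.
Qed.

Definition liminf_set (g : C -> Rbar) r := fun w => exists zeta, 0 < Cmod zeta < r /\ w = g zeta.

Lemma LI1 (g : C -> Rbar) X :
  (exists r, 0 < r /\ forall zeta, 0 < Cmod zeta < r -> Rbar_le (Finite X) (g zeta)) ->
  Rbar_le (Finite X) (liminf0 g).
Proof.
move=> [r [Hr H]]. rewrite /liminf0.
apply: Rbar_le_trans; last apply lub_ub; last by exists r; split; [exact Hr| reflexivity].
apply glb_greatest => w [z [Hz ->]]. exact: H.
Qed.

Lemma LI2 (g : C -> Rbar) X : Rbar_le (Finite X) (liminf0 g) ->
  forall eps, 0 < eps -> exists r, 0 < r /\ forall zeta, 0 < Cmod zeta < r -> Rbar_le (Finite (X - eps)) (g zeta).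
Proof.
move=> HX eps He. apply NNPP => Hn.
have Hall : forall r, 0 < r -> exists zeta, 0 < Cmod zeta < r /\ Rbar_lt (g zeta) (Finite (X - eps)).
  move=> r Hr. apply NNPP => Hc. apply Hn. exists r; split => // z Hz.
  apply Rbar_not_lt_le => Hlt. apply Hc. by exists z.
have : Rbar_le (liminf0 g) (Finite (X - eps)).
  apply lub_least => y [r [Hr ->]].
  have [z [Hz Hlt]] := Hall r Hr.
  apply: Rbar_le_trans; first (apply glb_lb; exists z; split; [exact Hz| reflexivity]).
  by apply Rbar_lt_le.
move=> H. have := Rbar_le_trans _ _ _ HX H. simpl; lra.
Qed.

Lemma LI3 (L : Rbar) X : (forall eps, 0 < eps -> Rbar_le (Finite (X - eps)) L) -> Rbar_le (Finite X) L.
Proof.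
case: L => [l| |] /= H //.
- apply Rnot_lt_le => Hlt. have := H ((X - l)/2). lra.
- have := H 1; simpl; lra.
Qed.

Lemma fin_delta n (P : 'I_n -> R -> Prop) :
  (forall k d d', P k d -> 0 < d' <= d -> P k d') ->
  (forall k, exists d, 0 < d /\ P k d) -> exists d, 0 < d /\ forall k, P k d.
Proof.
move=> Hmon Hex.
suff : forall l : list 'I_n, exists d, 0 < d /\ forall k, In k l -> P k d.
  move=> /(_ (ord_list n)) [d [Hd H]]. exists d; split => // k. apply H; exact: In_ord.
elim => [|k l [d [Hd IH]]]; first by exists 1; split => //; lra.
have [d1 [Hd1 H1]] := Hex k.
exists (Rmin d1 d); split; first by apply Rmin_pos.
move=> j [<-|Hj].
- apply: Hmon H1 _. split; [by apply Rmin_pos| apply Rmin_l].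
- apply: Hmon (IH j Hj) _. split; [by apply Rmin_pos| apply Rmin_r].
Qed.

Lemma coord_cont (f : C -> C) (al : C) : @ex_derive C_AbsRing C_NormedModule f al ->
  forall eps, 0 < eps -> exists d, 0 < d /\ forall zeta, Cmod zeta < d -> Cmod (Cminus (f (Cplus al zeta)) (f al)) < eps.
Proof.
move=> H eps He.
have Hc := ex_derive_continuous f al H.
have He2 : 0 < eps / 2 by lra.
move/filterlim_locally: Hc => /(_ (mkposreal _ He2)) [d Hd].
exists d; split; first exact: cond_pos.
move=> z Hz.
have Hb : @ball (AbsRing_UniformSpace C_AbsRing) al d (Cplus al z).
  rewrite /ball /= /AbsRing_ball /abs /= /minus /plus /opp /=.
  have -> : (al + z + - al)%C = z by ring. exact Hz.
have := norm_compat2 _ _ _ (Hd _ Hb).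
move=> H2.
have H3 : Cmod (Cminus (f (Cplus al z)) (f al)) < sqrt 2 * (eps / 2) := H2.
have Hs : sqrt 2 * sqrt 2 = 2 by apply sqrt_sqrt; lra.
have Hs0 : 0 <= sqrt 2 by apply sqrt_pos.
nra.
Qed.

Definition CC : Type := C.
HB.instance Definition _ := gen_eqMixin CC.
HB.instance Definition _ := gen_choiceMixin CC.

Lemma CC_addA : associative (Cplus : CC -> CC -> CC).
Proof. move=> x y z; by rewrite Cplus_assoc. Qed.
Lemma CC_addC : commutative (Cplus : CC -> CC -> CC).
Proof. move=> x y; exact: Cplus_comm. Qed.
Lemma CC_add0 : left_id (RtoC 0 : CC) Cplus.
Proof. move=> x; exact: Cplus_0_l. Qed.
Lemma CC_addN : left_inverse (RtoC 0 : CC) Copp Cplus.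
Proof. move=> x; rewrite Cplus_comm; exact: Cplus_opp_r. Qed.
HB.instance Definition _ := GRing.isZmodule.Build CC CC_addA CC_addC CC_add0 CC_addN.

Lemma CC_mulA : associative (Cmult : CC -> CC -> CC).
Proof. move=> x y z; by rewrite Cmult_assoc. Qed.
Lemma CC_mulC : commutative (Cmult : CC -> CC -> CC).
Proof. move=> x y; exact: Cmult_comm. Qed.
Lemma CC_mul1 : left_id (RtoC 1 : CC) Cmult.
Proof. move=> x; exact: Cmult_1_l. Qed.
Lemma CC_mulD : left_distributive (Cmult : CC -> CC -> CC) Cplus.
Proof. move=> x y z; exact: Cmult_plus_distr_r. Qed.
Lemma CC_1n0 : (RtoC 1 : CC) != RtoC 0.
Proof. apply/eqP => H. injection H; lra. Qed.
HB.instance Definition _ := GRing.Zmodule_isComNzRing.Build CC CC_mulA CC_mulC CC_mul1 CC_mulD CC_1n0.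

Section CCfield.
Local Open Scope ring_scope.
Lemma CC_mulV : forall x : CC, x != 0 -> (Cinv x : CC) * x = 1.
Proof. move=> x /eqP Hx. exact: Cinv_l. Qed.
Lemma CC_inv0 : (Cinv (0 : CC) : CC) = 0.
Proof. rewrite /Cinv /=. change (0 : CC) with (RtoC 0). rewrite /RtoC /=.
 by rewrite /Rdiv !Rmult_0_l Ropp_0 Rmult_0_l. Qed.
End CCfield.
HB.instance Definition _ := GRing.ComNzRing_isField.Build CC CC_mulV CC_inv0.

Lemma Rmult_assoc' : associative Rmult. Proof. move=> *; by rewrite Rmult_assoc. Qed.
Lemma Rplus_assoc' : associative Rplus. Proof. move=> *; by rewrite Rplus_assoc. Qed.
HB.instance Definition _ := Monoid.isComLaw.Build R 1%R Rmult Rmult_assoc' Rmult_comm Rmult_1_l.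
HB.instance Definition _ := Monoid.isComLaw.Build R 0%R Rplus Rplus_assoc' Rplus_comm Rplus_0_l.

Import GRing.Theory.
Section LinAlg.
Local Open Scope ring_scope.

Lemma fold_Cplus_big (T : Type) (s : list T) (f : T -> C) :
  fold_right Cplus (RtoC 0) (List.map f s) = \sum_(i <- s) (f i : CC).
Proof.
elim: s => [|x s IH] /=; first by rewrite big_nil.
by rewrite big_cons IH.
Qed.

Lemma Csum_big n (f : 'I_n -> C) : Csum n f = \sum_(i < n) (f i : CC).
Proof. by rewrite /Csum fold_Cplus_big /ord_list big_enum. Qed.

Definition Wm {n} (v : 'I_n -> cvec n) : 'M[CC]_n := \matrix_(k, q) (Cconj (v k q) : CC).
Definition lin {n} (M : 'M[CC]_n) (z : cvec n) (k : 'I_n) : CC := \sum_q M k q * (z q : CC).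

Lemma cdot_lin n (v : 'I_n -> cvec n) z k : cdot n z (v k) = lin (Wm v) z k.
Proof.
rewrite /cdot Csum_big /lin; apply: eq_bigr => q _.
by rewrite mxE mulrC.
Qed.


Lemma Cconj0 : Cconj (RtoC 0) = RtoC 0.
Proof. by rewrite /Cconj /RtoC /= Ropp_0. Qed.

Lemma Cconj_sum n (F : 'I_n -> CC) : Cconj (\sum_i F i) = \sum_i (Cconj (F i) : CC).
Proof. apply: (big_morph Cconj) => [x y|]; [exact: Cplus_conj | exact: Cconj0]. Qed.

Lemma basis_unit n (v : 'I_n -> cvec n) : is_basis n v -> Wm v \in unitmx.
Proof.
move=> Hb. rewrite -row_free_unit -kermx_eq0; apply/eqP/matrixP => i q; rewrite [RHS]mxE.
have HK := mulmx_ker (Wm v).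
pose c := fun k => Cconj (kermx (Wm v) i k).
have Hc : forall k, Csum n (fun j => Cmult (c j) (v j k)) = RtoC 0.
  move=> k. rewrite Csum_big.
  move/matrixP: (HK) => /(_ i k). rewrite !mxE => /(congr1 Cconj).
  rewrite Cconj_sum. change (0 : CC) with (RtoC 0). rewrite Cconj0 => H.
  apply: eq_trans _ H; apply: eq_bigr => j _. by rewrite /c Cmult_conj [Wm v j k]mxE Cconj_conj.
have := Hb c Hc q. rewrite /c => H. rewrite -(Cconj_conj (kermx (Wm v) i q : CC)) H. exact: Cconj0.
Qed.

End LinAlg.

Section Core.
Local Open Scope ring_scope.
Variables (n : nat) (v v' : 'I_n -> cvec n).
Hypotheses (Hv : is_basis n v) (Hv' : is_basis n v').

Definition Ep : 'M[CC]_n := invmx (Wm v').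
Definition Bm : 'M[CC]_n := Wm v *m invmx (Wm v').
Definition Am : 'M[CC]_n := Wm v' *m invmx (Wm v).

Lemma lin_A z j : lin (Wm v') z j = \sum_k Am j k * lin (Wm v) z k.
Proof.
have HAW : Am *m Wm v = Wm v' by rewrite /Am -mulmxA mulVmx ?mulmx1 //; exact: basis_unit.
rewrite /lin -HAW.
under eq_bigr do rewrite mxE big_distrl /=.
rewrite exchange_big /=. apply: eq_bigr => k _. rewrite big_distrr /=.
apply: eq_bigr => q _. by rewrite mulrA.
Qed.

Lemma lin_dual (M : 'M[CC]_n) (t : C) j i :
  lin M (fun q => Cmult t (Ep q j)) i = (t : CC) * (M *m Ep) i j.
Proof.
rewrite /lin mxE big_distrr /=. apply: eq_bigr => q _.
change (Cmult t (Ep q j)) with ((t : CC) * Ep q j). by rewrite mulrCA.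
Qed.

Lemma WEp : Wm v' *m Ep = 1%:M.
Proof. rewrite /Ep mulmxV //; exact: basis_unit. Qed.

Lemma AB1 : Am *m Bm = 1%:M.
Proof.
rewrite /Am /Bm -mulmxA (mulmxA (invmx (Wm v))) mulVmx ?mul1mx ?mulmxV //; exact: basis_unit.
Qed.

Lemma A_cof j k : Am j k != 0 -> cofactor Bm k j != 0.
Proof.
have [_ Hu] := mulmx1_unit AB1.
have HA : invmx Bm = Am by rewrite -[invmx Bm]mul1mx -AB1 -mulmxA mulmxV // mulmx1.
rewrite -HA /invmx Hu !mxE. apply: contra => /eqP ->. by rewrite mulr0.
Qed.

Lemma det_perm p (M : 'M[CC]_p) : \det M != 0 -> exists s : 'S_p, forall i, M i (s i) != 0.
Proof.
move=> Hd. case: (pickP (fun s : 'S_p => [forall i, M i (s i) != 0])) => [s /forallP Hs | H].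
  by exists s.
exfalso. move/eqP: Hd; apply. rewrite /determinant. apply: big1 => s _.
have := H s. move/negbT/forallPn => [i]. rewrite negbK => /eqP Hi.
by rewrite (bigD1 i) //= Hi mul0r mulr0.
Qed.

Lemma cof_perm k j : cofactor Bm k j != 0 ->
  exists s : 'S_n.-1, forall i, Bm (lift k i) (lift j (s i)) != 0.
Proof.
rewrite /cofactor => Hc.
have Hd : \det (row' k (col' j Bm)) != 0 by apply: contra Hc => /eqP ->; rewrite mulr0.
have [s Hs] := @det_perm _ _ Hd. exists s => i. have := Hs i. by rewrite !mxE.
Qed.

End Core.

Definition CC0 : CC := RtoC 0.

Lemma fold_Rmult_big (T : Type) (s : list T) (f : T -> R) :
  fold_right Rmult 1 (List.map f s) = \big[Rmult/1]_(i <- s) f i.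
Proof. elim: s => [|x s IH] /=; first by rewrite big_nil. by rewrite big_cons IH. Qed.

Lemma tau_big n (m : 'I_n -> R) : tau n m = \big[Rmult/1]_(i < n) m i.
Proof. by rewrite /tau fold_Rmult_big /ord_list big_enum. Qed.

Lemma tau_split n (m : 'I_n -> R) k : tau n m = m k * \big[Rmult/1]_(i < n.-1) m (lift k i).
Proof. rewrite tau_big. exact: (bigD1_ord k (P:=xpredT)). Qed.

Lemma prod_le p (a b : 'I_p -> R) : (forall i, 0 < a i <= b i) ->
  0 < \big[Rmult/1]_(i < p) a i <= \big[Rmult/1]_(i < p) b i.
Proof.
move=> H. apply: (big_ind2 (fun x y => 0 < x <= y)) => //.
- lra.
- move=> x1 x2 y1 y2 [H1 H1'] [H2 H2']. split; first exact: Rmult_lt_0_compat.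
  apply Rmult_le_compat; lra.
Qed.

Lemma tau_pos n (m : 'I_n -> R) : (forall k, 0 < m k) -> 0 < tau n m.
Proof.
move=> Hm. rewrite tau_big. have := @prod_le n m m. move=> H. apply H => i. split; [exact: Hm | lra].
Qed.

Lemma LA2 n (v v' : 'I_n -> cvec n) (m m' : 'I_n -> R) :
  is_basis n v -> is_basis n v' -> (forall k, 0 < m k) -> (forall k, 0 < m' k) ->
  (forall k j, Bm n v v' k j != CC0 -> m' j <= m k) ->
  forall j k, Am n v v' j k != CC0 -> tau n m' * m k <= tau n m * m' j.
Proof.
move=> Hv Hv' Hm Hm' HB j k HA.
have [s Hs] := @cof_perm n v v' k j (@A_cof n v v' Hv Hv' j k HA).
rewrite (@tau_split n m' j) (@tau_split n m k).
have E : \big[Rmult/1]_(i < n.-1) m' (lift j i) = \big[Rmult/1]_(i < n.-1) m' (lift j (s i)).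
  exact: (reindex_inj (@perm_inj _ s)).
have [HP HP'] : 0 < \big[Rmult/1]_(i < n.-1) m' (lift j (s i)) <= \big[Rmult/1]_(i < n.-1) m (lift k i).
  apply prod_le => i. split; [exact: Hm'| apply HB; exact: Hs].
rewrite E. have Hq : 0 < m' j * m k by apply Rmult_lt_0_compat.
have : (m' j * m k) * \big[Rmult/1]_(i < n.-1) m' (lift j (s i)) <= (m' j * m k) * \big[Rmult/1]_(i < n.-1) m (lift k i).
  apply Rmult_le_compat_l; lra.
nra.
Qed.

Lemma Cmod_sum n (F : 'I_n -> CC) :
  Cmod (\sum_(k < n) F k)%ring <= \big[Rplus/0]_(k < n) Cmod (F k).
Proof.
apply: (big_ind2 (fun (x : CC) (y : R) => Cmod x <= y)).
- rewrite Cmod_0; lra.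
- move=> x1 y1 x2 y2 H1 H2. change (Cmod (Cplus x1 x2) <= y1 + y2). have := Cmod_triangle x1 x2. lra.
- move=> i _; lra.
Qed.

Lemma sum_le p (f g : 'I_p -> R) : (forall i, f i <= g i) ->
  \big[Rplus/0]_(i < p) f i <= \big[Rplus/0]_(i < p) g i.
Proof.
move=> H. apply: (big_ind2 Rle) => //; first lra.
move=> *; lra.
Qed.

Lemma sum_mulr p (f : 'I_p -> R) e :
  \big[Rplus/0]_(i < p) (f i * e) = (\big[Rplus/0]_(i < p) f i) * e.
Proof.
apply: (big_ind2 (fun x y => x = y * e)) => //.
- ring.
- move=> x1 x2 y1 y2 -> ->; ring.
Qed.

Lemma sum_ge0 p (f : 'I_p -> R) : (forall i, 0 <= f i) -> 0 <= \big[Rplus/0]_(i < p) f i.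
Proof.
move=> H. apply: (big_ind (fun x => 0 <= x)) => //; first lra. move=> *; lra.
Qed.

Lemma sum_ge_term p (f : 'I_p -> R) j : (forall i, 0 <= f i) -> f j <= \big[Rplus/0]_(i < p) f i.
Proof.
move=> H. rewrite (bigD1_ord j (P:=xpredT)) //=.
have := @sum_ge0 p.-1 (fun i => f (lift j i)) (fun i => H _).
move=> H0. rewrite -{1}(Rplus_0_r (f j)). apply Rplus_le_compat_l. exact H0.
Qed.

Lemma ln_ge0 x : 1 <= x -> 0 <= ln x.
Proof. case=> H; last (rewrite -H ln_1; lra). rewrite -ln_1. left; apply ln_increasing; lra. Qed.

Lemma exp_cmp (y t t' a b : R) : y <= 0 -> 0 < t -> 0 < t' -> 0 < a -> 0 < b ->
  t' * a <= t * b -> y / a <= t' / t * y / b.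
Proof.
move=> Hy Ht Ht' Ha Hb H.
have E : y / a - t' / t * y / b = (y * (t * b - t' * a)) * / (t * a * b) by field; repeat split; lra.
have HD : 0 < / (t * a * b) by apply Rinv_0_lt_compat; apply Rmult_lt_0_compat; [apply Rmult_lt_0_compat|]; lra.
have Hyd : y * (t * b - t' * a) <= 0 by nra.
nra.
Qed.

Lemma step1 n (v v' : 'I_n -> cvec n) (m m' : 'I_n -> R) :
  is_basis n v -> (forall k, 0 < m k) -> (forall k, 0 < m' k) ->
  (forall j k, Am n v v' j k != CC0 -> tau n m' * m k <= tau n m * m' j) ->
  exists K, 0 <= K /\ forall z y, y <= 0 -> Rbar_le (Psi n v m z) (Finite y) ->
    Rbar_le (Psi n v' m' z) (Finite (tau n m' / tau n m * y + K)).
Proof.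
move=> Hv Hm Hm' HL2.
have Ht := @tau_pos n m Hm. have Ht' := @tau_pos n m' Hm'.
pose S j := \big[Rplus/0]_(k < n) Cmod (Am n v v' j k).
have HS : forall j, 0 <= S j by move=> j; apply sum_ge0 => k; apply Cmod_ge_0.
pose K := \big[Rplus/0]_(j < n) (m' j * ln (1 + S j)).
have HKj : forall j, m' j * ln (1 + S j) <= K.
  move=> j. apply (@sum_ge_term n (fun j => m' j * ln (1 + S j)) j) => i.
  apply Rmult_le_pos; first by left. apply ln_ge0. have := HS i; lra.
exists K; split.
  apply sum_ge0 => i. apply Rmult_le_pos; first by left. apply ln_ge0. have := HS i; lra.
move=> z y Hy HP.
move/(@Psi_le n v m z y Hm): HP => Hk.
apply/(@Psi_le n v' m' z _ Hm') => j.
set c := tau n m' / tau n m.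
rewrite cdot_lin (@lin_A n v v' Hv).
apply: Rle_trans (@Cmod_sum n _) _.
apply: Rle_trans.
  apply: (@sum_le n _ (fun k => Cmod (Am n v v' j k) * exp (c * y / m' j))) => k.
  rewrite Cmod_mult. case: (eqVneq (Am n v v' j k) CC0) => HA.
    rewrite HA /CC0 Cmod_0 !Rmult_0_l; lra.
  apply Rmult_le_compat_l; first exact: Cmod_ge_0.
  rewrite -cdot_lin. apply: Rle_trans (Hk k) _. apply exp_le'.
  apply exp_cmp => //. exact (HL2 j k HA).
rewrite sum_mulr.
have H1 : S j <= exp (K / m' j).
  have Hl : ln (1 + S j) <= K / m' j by apply/mul_le_div.
  apply: Rle_trans (_ : S j <= exp (ln (1 + S j))) _.
    rewrite exp_ln; have := HS j; lra.
  exact: exp_le'.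
have -> : (c * y + K) / m' j = c * y / m' j + K / m' j by field; have := Hm' j; lra.
rewrite exp_plus Rmult_comm. apply Rmult_le_compat_l; first (left; apply exp_pos). exact H1.
Qed.

Lemma testHB n (v v' : 'I_n -> cvec n) (m m' : 'I_n -> R) Cst :
  is_basis n v' -> (forall k, 0 < m k) -> (forall k, 0 < m' k) ->
  (forall z, in_polydisk n z ->
     Rbar_le (Psi n v m z) (Rbar_plus (Psi n v' m' z) (Finite Cst))) ->
  forall k j, Bm n v v' k j != CC0 -> m' j <= m k.
Proof.
move=> Hv' Hm Hm' H k j /eqP HB. apply Rnot_lt_le => Hlt.
pose b := Cmod (Bm n v v' k j).
have Hb : 0 < b by apply Cmod_gt_0.
pose M := 1 + \big[Rplus/0]_(q < n) Cmod (Ep n v' q j).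
have HM : forall q, Cmod (Ep n v' q j) < M.
  move=> q. have := @sum_ge_term n (fun q => Cmod (Ep n v' q j)) q (fun i => Cmod_ge_0 _). rewrite /M; lra.
have HM0 : 0 < M by have := HM j; have := Cmod_ge_0 (Ep n v' j j); lra.
pose T := Rmax (ln M) ((Cst - m k * ln b + 1) / (m' j - m k)).
pose t := exp (- T).
have Ht : 0 < t by apply exp_pos.
have HtM : t * M <= 1.
  have : t <= exp (- ln M) by apply exp_le'; apply Ropp_le_contravar; apply Rmax_l.
  rewrite exp_Ropp exp_ln // => Htl.
  have : t * M <= / M * M by apply Rmult_le_compat_r; lra.
  rewrite Rinv_l; lra.
pose z := fun q => Cmult (RtoC t) (Ep n v' q j).
have Hz : in_polydisk n z.
  move=> q. rewrite /z Cmod_mult Cmod_R Rabs_pos_eq; last lra.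
  have := HM q. have := Cmod_ge_0 (Ep n v' q j). nra.
have HP' : Rbar_le (Psi n v' m' z) (Finite (m' j * (- T))).
  apply/(@Psi_le n v' m' z _ Hm') => i.
  rewrite cdot_lin /z lin_dual (@WEp n v' Hv') mxE.
  case: (eqVneq i j) => [->|Hij].
  - rewrite /= GRing.mulr1 Cmod_R Rabs_pos_eq; last lra.
    have -> : m' j * - T / m' j = - T by field; have := Hm' j; lra.
    rewrite /t; lra.
  - rewrite /= GRing.mulr0. rewrite Cmod_0. left; apply exp_pos.
have HP : Rbar_le (Psi n v m z) (Finite (m' j * (- T) + Cst)).
  apply: Rbar_le_trans (H z Hz) _.
  exact: (Rbar_plus_le_compat _ _ _ _ HP' (Rbar_le_refl (Finite Cst))).
move/(@Psi_le n v m z _ Hm)/(_ k): HP.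
rewrite cdot_lin /z lin_dual.
change (Wm v *m Ep n v')%ring with (Bm n v v').
rewrite Cmod_mult Cmod_R Rabs_pos_eq; last lra.
rewrite -/b.
have -> : t * b = exp (- T + ln b) by rewrite exp_plus exp_ln.
move/exp_le_inv. rewrite -mul_le_div; last exact: Hm.
have HT : (Cst - m k * ln b + 1) / (m' j - m k) <= T by apply Rmax_r.
have Hd : 0 < m' j - m k by lra.
have : (m' j - m k) * ((Cst - m k * ln b + 1) / (m' j - m k)) <= (m' j - m k) * T.
  apply Rmult_le_compat_l; lra.
have -> : (m' j - m k) * ((Cst - m k * ln b + 1) / (m' j - m k)) = Cst - m k * ln b + 1 by field; lra.
nra.
Qed.

Lemma lin_bound n (W : 'M[CC]_n) k : exists e, 0 < e /\
  forall x : cvec n, (forall q, Cmod (x q) < e) -> Cmod (lin W x k) <= 1.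
Proof.
pose S := \big[Rplus/0]_(q < n) Cmod (W k q).
have HS : 0 <= S by apply sum_ge0 => q; apply Cmod_ge_0.
exists (/ (1 + S)); split; first by apply Rinv_0_lt_compat; lra.
move=> x Hx. rewrite /lin. apply: Rle_trans (@Cmod_sum n _) _.
apply: Rle_trans.
  apply: (@sum_le n _ (fun q => Cmod (W k q) * / (1 + S))) => q.
  rewrite Cmod_mult. apply Rmult_le_compat_l; first exact: Cmod_ge_0. left; exact: Hx.
rewrite sum_mulr -/S.
have -> : S * / (1 + S) = 1 - / (1 + S) by field; lra.
have : 0 < / (1 + S) by apply Rinv_0_lt_compat; lra.
lra.
Qed.

Lemma near0 n (v : 'I_n -> cvec n) (m : 'I_n -> R) (phi : C -> cvec n) a al :
  (forall k, 0 < m k) ->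
  (forall i, @ex_derive C_AbsRing C_NormedModule (fun w => phi w i) al) -> phi al = a ->
  exists r, 0 < r /\ r <= 1 /\ forall zeta, Cmod zeta < r ->
    Rbar_le (Psi n v m (vsub n (phi (Cplus al zeta)) a)) (Finite 0).
Proof.
move=> Hm Hd Ha.
have [e [He Hek]] : exists e, 0 < e /\ forall k (x : cvec n), (forall q, Cmod (x q) < e) -> Cmod (lin (Wm v) x k) <= 1.
  apply (@fin_delta n (fun k e => forall x : cvec n, (forall q, Cmod (x q) < e) -> Cmod (lin (Wm v) x k) <= 1)).
  - move=> k d d' H0 Hd' x Hx. apply H0 => q. have := Hx q; lra.
  - move=> k. exact: lin_bound.
have [d [Hd0 Hdi]] : exists d, 0 < d /\ forall i zeta, Cmod zeta < d -> Cmod (Cminus (phi (Cplus al zeta) i) (phi al i)) < e.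
  apply (@fin_delta n (fun i d => forall zeta, Cmod zeta < d -> Cmod (Cminus (phi (Cplus al zeta) i) (phi al i)) < e)).
  - move=> i d d' H0 Hd' z Hz. apply H0. lra.
  - move=> i. exact: (@coord_cont (fun w => phi w i) al (Hd i) e He).
exists (Rmin d 1); split; first by apply Rmin_pos; lra.
split; first exact: Rmin_r.
move=> z Hz. apply/(@Psi_le n v m _ _ Hm) => k.
rewrite /Rdiv Rmult_0_l exp_0 cdot_lin. apply Hek => q.
rewrite /vsub -Ha. apply Hdi. have := Rmin_l d 1. lra.
Qed.

Lemma min2_fin (t : R) (L : Rbar) : Rbar_le (Finite 0) L ->
  exists M, Rbar_min2 (Finite t) L = Finite M /\ M <= t /\ Rbar_le (Finite M) L.
Proof.
rewrite /Rbar_min2. case: L => [l| |] H0 //=; case: Rbar_le_dec => /= H.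
- exists t; split => //; split => //; lra.
- exists l; split => //; split => /=; [ apply Rnot_lt_le => Hl; apply H; simpl; lra | lra].
- exists t; split => //; split => //; lra.
- exfalso; apply H; by [].
Qed.

Lemma min2_ge (t X : R) (L : Rbar) : X <= t -> Rbar_le (Finite X) L ->
  exists M, Rbar_min2 (Finite t) L = Finite M /\ X <= M.
Proof.
rewrite /Rbar_min2. case: L => [l| |] Ht H0 //=; case: Rbar_le_dec => /= H.
- by exists t.
- by exists l.
- by exists t.
- exfalso; apply H; by [].
Qed.

Lemma Psi_le_min n v m z (a b : R) : Rbar_le (Psi n v m z) (Finite a) -> Rbar_le (Psi n v m z) (Finite b) ->
  Rbar_le (Psi n v m z) (Finite (Rmin a b)).
Proof. rewrite /Rmin; case: Rle_dec => _ H1 H2 //. Qed.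

Lemma per_alpha n (v v' : 'I_n -> cvec n) (m m' : 'I_n -> R) (phi : C -> cvec n) a al K :
  (forall k, 0 < m k) -> (forall k, 0 < m' k) ->
  (forall i, @ex_derive C_AbsRing C_NormedModule (fun w => phi w i) al) ->
  0 <= K ->
  (forall z y, y <= 0 -> Rbar_le (Psi n v m z) (Finite y) ->
    Rbar_le (Psi n v' m' z) (Finite (tau n m' / tau n m * y + K))) ->
  exists M M', multiplicity n phi a v m al = Finite M /\ multiplicity n phi a v' m' al = Finite M' /\
    tau n m' / tau n m * M <= M'.
Proof.
move=> Hm Hm' Hd HK Hstep.
have Ht := @tau_pos n m Hm. have Ht' := @tau_pos n m' Hm'.
set c := tau n m' / tau n m.
have Hc : 0 < c by apply Rdiv_lt_0_compat.
rewrite /multiplicity. case: excluded_middle_informative => Ha; last first.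
  exists 0, 0; split => //; split => //; lra.
set g := fun zeta => Rbar_div (Psi n v m (vsub n (phi (Cplus al zeta)) a)) (Finite (ln (Cmod zeta))).
set g' := fun zeta => Rbar_div (Psi n v' m' (vsub n (phi (Cplus al zeta)) a)) (Finite (ln (Cmod zeta))).
have [r0 [Hr0 [Hr01 H0]]] := @near0 n v m phi a al Hm Hd Ha.
have [r0' [Hr0' [Hr01' H0']]] := @near0 n v' m' phi a al Hm' Hd Ha.
pose r1 := Rmin r0 r0'.
have Hr1 : 0 < r1 by apply Rmin_pos.
have Hln : forall zeta, 0 < Cmod zeta < r1 -> ln (Cmod zeta) < 0.
  move=> z [Hz1 Hz2]. rewrite -ln_1. apply ln_increasing => //.
  have := Rmin_l r0 r0'. rewrite -/r1. lra.
have Hin0 : forall zeta, 0 < Cmod zeta < r1 -> Cmod zeta < r0 /\ Cmod zeta < r0'.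
  move=> z [_ Hz]. have := Rmin_l r0 r0'. have := Rmin_r r0 r0'. rewrite -/r1. lra.
have HL : Rbar_le (Finite 0) (liminf0 g).
  apply LI1. exists r1; split => // z Hz. rewrite /g div_le; last exact: Hln.
  rewrite Rmult_0_l. apply H0. by case: (Hin0 z Hz).
have [M [HM [HMt HML]]] := @min2_fin (tau n m) _ HL.
rewrite HM.
have Hkey : Rbar_le (Finite (c * M)) (liminf0 g').
  apply LI3 => eps He.
  pose e1 := eps / (c + 1).
  have He1 : 0 < e1 by apply Rdiv_lt_0_compat; lra.
  have Heps : eps = e1 * (c + 1) by rewrite /e1; field; lra.
  have [r [Hr Hg]] := @LI2 _ _ HML _ He1.
  apply LI1. exists (Rmin (Rmin r r1) (exp (- K / e1))); split.
    apply Rmin_pos; [apply Rmin_pos => // | apply exp_pos].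
  move=> z [Hz0 Hz].
  have Hz1 : Cmod z < r /\ Cmod z < r1 /\ Cmod z < exp (- K / e1).
    have := Rmin_l (Rmin r r1) (exp (- K / e1)). have := Rmin_r (Rmin r r1) (exp (- K / e1)).
    have := Rmin_l r r1. have := Rmin_r r r1. lra.
  case: Hz1 => Hzr [Hzr1 HzK].
  have Hl := Hln z (conj Hz0 Hzr1).
  set l := ln (Cmod z) in Hl *.
  have HlK : l < - K / e1.
    rewrite /l -(ln_exp (- K / e1)). by apply ln_increasing.
  have HlK' : e1 * l < - K.
    have := Rmult_lt_compat_l e1 _ _ He1 HlK. have -> : e1 * (- K / e1) = - K by field; lra. done.
  have Hgz := Hg z (conj Hz0 Hzr).
  rewrite /g div_le // in Hgz.
  have HP0 : Rbar_le (Psi n v m (vsub n (phi (Cplus al z)) a)) (Finite 0).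
    apply H0. by case: (Hin0 z (conj Hz0 Hzr1)).
  have HPy := @Psi_le_min n v m _ _ _ Hgz HP0.
  have Hy : Rmin ((M - e1) * l) 0 <= 0 by apply Rmin_r.
  have HP' := Hstep _ _ Hy HPy.
  rewrite /g' div_le //.
  apply: Rbar_le_trans HP' _. simpl.
  have : Rmin ((M - e1) * l) 0 <= (M - e1) * l by apply Rmin_l.
  rewrite -/c. move=> Hmin.
  have : c * Rmin ((M - e1) * l) 0 <= c * ((M - e1) * l) by apply Rmult_le_compat_l; lra.
  rewrite Heps -/l. nra.
have Hct : c * M <= tau n m'.
  have -> : tau n m' = c * tau n m by rewrite /c; field; lra.
  apply Rmult_le_compat_l; lra.
have [M' [HM' HMM']] := @min2_ge _ _ _ Hct Hkey.
exists M, M'. by split.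
Qed.

Theorem lemma5p1 (n : nat) (Omega : cvec n -> Prop)
  (v : 'I_n -> cvec n) (m : 'I_n -> R) (v' : 'I_n -> cvec n) (m' : 'I_n -> R)
  (Cst : R) (A : C -> Prop) (a : cvec n) (phi : C -> cvec n) :
  bounded_domain n Omega ->
  elem_indicator n v m ->
  elem_indicator n v' m' ->
  (forall z, in_polydisk n z ->
     Rbar_le (Psi n v m z) (Rbar_plus (Psi n v' m' z) (Finite Cst))) ->
  0 < tau n m' ->
  (forall x, A x -> Cmod x < 1) ->
  Omega a ->
  Hol_disk n Omega phi ->
  Rbar_le (Rbar_sum_over A (multiplicity n phi a v' m')) (Finite (tau n m')) ->
  Rbar_le (Rbar_sum_over A (multiplicity n phi a v m)) (Finite (tau n m)).
Proof.
move=> _ [Hv Hm] [Hv' Hm'] H _ HA _ [_ Hhol] Hsum'.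
have Ht := @tau_pos n m Hm. have Ht' := @tau_pos n m' Hm'.
have HB := @testHB n v v' m m' Cst Hv' Hm Hm' H.
have HL2 := @LA2 n v v' m m' Hv Hv' Hm Hm' HB.
have [K [HK Hstep]] := @step1 n v v' m m' Hv Hm Hm' HL2.
set c := tau n m' / tau n m.
have Hc : 0 < c by apply Rdiv_lt_0_compat.
have Hper : forall al, A al -> exists M M', multiplicity n phi a v m al = Finite M /\
    multiplicity n phi a v' m' al = Finite M' /\ c * M <= M'.
  move=> al Hal. apply: (@per_alpha n v v' m m' phi a al K Hm Hm' _ HK Hstep).
  move=> i. apply Hhol. exact: HA.
have Hfold : forall l, (forall x, In x l -> A x) -> exists S S',
    fold_right Rbar_plus (Finite 0) (List.map (multiplicity n phi a v m) l) = Finite S /\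
    fold_right Rbar_plus (Finite 0) (List.map (multiplicity n phi a v' m') l) = Finite S' /\
    c * S <= S'.
  elim => [|x l IH] Hl /=.
    exists 0, 0; split => //; split => //; lra.
  have [S [S' [E1 [E2 HS]]]] := IH (fun y Hy => Hl y (or_intror Hy)).
  have [M [M' [F1 [F2 HM]]]] := Hper x (Hl x (or_introl erefl)).
  exists (M + S), (M' + S'). rewrite E1 E2 F1 F2 /=. split => //; split => //. lra.
apply lub_least => s [l [Hnd [Hl ->]]].
have [S [S' [E1 [E2 HS]]]] := Hfold l Hl.
rewrite E1.
have HS' : Rbar_le (Finite S') (Finite (tau n m')).
  apply: Rbar_le_trans Hsum'. apply lub_ub. exists l. split; first exact Hnd. split; first exact Hl. by rewrite E2.
simpl in HS' |- *.
have -> : tau n m = tau n m' / c by rewrite /c; field; lra.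
apply (Rmult_le_reg_l c) => //.
have -> : c * (tau n m' / c) = tau n m' by field; lra.
lra.
Qed.
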